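(* Let $(Q,\lambda)$ be an $\mathcal{R}$-characteristic pair on an admissible $n$-dimensional simple polytope $Q$ with $\ell$ vertices. Assume that for every term $B_i$ with $\dim B_i>1$ occurring in any retraction sequence of $Q$, $$\gcd\{g_{B_i}(v)\mid v\text{ a free vertex of }B_i\}=1.$$ Then for every prime $p$ there exists a retraction sequence $\{(B_i,E_i,b_i)\}_{i=1}^{\ell}$ of $Q$ with $\gcd\{p,g_{E_i}(b_i)\}=1$ for all $i=1,\dots,\ell$ (so $X(Q,\lambda)$ satisfies the hypothesis of Theorem 1.2 via the induced building sequence).
   Context: $Q$ is an $n$-dimensional simple convex polytope with facets $F_1,\dots,F_m$; $\lambda:\{F_1,\dots,F_m\}\to\mathbb{Z}^n$ is an $\mathcal{R}$-characteristic function, i.e. $\{\lambda(F_{i_1}),\dots,\lambda(F_{i_k})\}$ is linearly independent whenever $F_{i_1}\cap\cdots\cap F_{i_k}\ne\emptyset$. For a codimension-$k$ face $E=F_{i_1}\cap\cdots\cap F_{i_k}$, let $\rho_E:\mathbb{Z}^n\to\mathbb{Z}^n/\big((\mathrm{span}_{\mathbb{Z}}\{\lambda(F_{i_1}),\dots,\lambda(F_{i_k})\}\otimes\mathbb{R})\cap\mathbb{Z}^n\big)\cong\mathbb{Z}^{n-k}$, and for each facet $E\cap F_j\ne\emptyset$ ($j\notin\{i_1,\dots,i_k\}$) of $E$ let $\lambda_E(E\cap F_j)$ be the primitive vector in the direction of $\rho_E(\lambda(F_j))$. For a vertex $v=\bigcap_{s=1}^{n-k}(E\cap F_{j_s})$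 of $E$, $g_E(v)=|\det[\lambda_E(E\cap F_{j_1})^t,\dots,\lambda_E(E\cap F_{j_{n-k}})^t]|$ ($=1$ if $E=\{v\}$). A retraction sequence for $Q$ is a sequence of triples $(B_k,E_k,b_k)$, $k=1,\dots,\ell$: $B_1=E_1=Q$ and $b_1$ a vertex of $Q$; $B_k$ is the union of all faces of $B_{k-1}$ not containing $b_{k-1}$; $b_k$ is a free vertex of $B_k$, i.e. a vertex with a neighbourhood in $B_k$ homeomorphic as a manifold with corners to $\mathbb{R}^d_{\ge0}$ for some $d$, and $E_k$ is the unique $d$-dimensional face of $B_k$ containing $b_k$; the sequence ends with $B_\ell=E_\ell=\{b_\ell\}$. For a free vertex $v$ of such a $B_i$ with associated $d$-dimensional face $E$, write $g_{B_i}(v):=g_E(v)$. $Q$ is admissible if every complex $B_k$ obtained in this way (for any choices of free vertices) has at least one free vertex. *)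

(* Defs.v *)
From HB Require Import structures.
From mathcomp Require Import all_boot all_order all_algebra.
From Stdlib Require Import ClassicalEpsilon.
Set Implicit Arguments. Unset Strict Implicit. Unset Printing Implicit Defensive.
Import Order.TTheory GRing.Theory Num.Theory.

Section Geometry.
Local Open Scope ring_scope.
Variables (R : realFieldType) (n m : nat) (A : 'M[R]_(m, n)) (b : 'cV[R]_m).

Definition inQ (x : 'cV[R]_n) : Prop := forall i : 'I_m, (A *m x) i 0 <= b i 0.
Definition onF (i : 'I_m) (x : 'cV[R]_n) : Prop := inQ x /\ (A *m x) i 0 = b i 0.

Definition bounded_Q : Prop :=
  exists M : R, forall x, inQ x -> forall j : 'I_n, `|x j 0| <= M.
Definition fulldim_Q : Prop :=
  exists x : 'cV[R]_n, forall i : 'I_m, (A *m x) i 0 < b i 0.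
(* each F_i is a genuine facet (irredundant inequality, distinct facets) *)
Definition facets_Q : Prop :=
  forall i : 'I_m, exists x, onF i x /\
    forall j : 'I_m, j != i -> (A *m x) j 0 < b j 0.

Definition vertex_pt (x : 'cV[R]_n) : Prop :=
  inQ x /\ forall (y z : 'cV[R]_n) (t : R), inQ y -> inQ z -> 0 < t < 1 ->
     x = t *: y + (1 - t) *: z -> y = z.

Definition simple_Q : Prop :=
  forall x, vertex_pt x -> #|[set i : 'I_m | (A *m x) i 0 == b i 0]| = n.

Definition simple_polytope : Prop :=
  [/\ bounded_Q, fulldim_Q, facets_Q & simple_Q].

Definition meets (S : {set 'I_m}) : Prop :=
  exists x, inQ x /\ forall i, i \in S -> (A *m x) i 0 = b i 0.
End Geometry.

(* Faces of a simple polytope are encoded by the set S of facets containing  *)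
(* them: the face E_S = \bigcap_{i in S} F_i (E_set0 = Q), of codimension    *)
(* #|S|.  K is the family of such S (the faces of Q).  A vertex v is an S in *)
(* K with #|S| = n; v lies in the face E_S iff S \subset v; the face E_T is  *)
(* contained in E_S iff S \subset T.                                         *)
Section Combinatorics.
Variables (n m : nat) (K : {set {set 'I_m}}).

Definition isvert (v : {set 'I_m}) : bool := (v \in K) && (#|v| == n).
Definition nverts : nat := #|[set v | isvert v]|.

(* v is a free vertex of the complex B (a set of faces) and E is the unique
   maximal face of B containing v (E_k in the paper) *)
Definition free_with (B : {set {set 'I_m}}) (v E : {set 'I_m}) : bool :=
  [&& isvert v, v \in B, E \in B, E \subset v &
      [forall S in B, (S \subset v) ==> (E \subset S)]].
Definition is_free (B : {set {set 'I_m}}) (v : {set 'I_m}) : bool :=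
  [exists E, free_with B v E].
Definition Eof (B : {set {set 'I_m}}) (v : {set 'I_m}) : {set 'I_m} :=
  odflt set0 [pick E | free_with B v E].

Definition next (B : {set {set 'I_m}}) (v : {set 'I_m}) : {set {set 'I_m}} :=
  [set S in B | ~~ (S \subset v)].

Definition dimB (B : {set {set 'I_m}}) : nat := \max_(S in B) (n - #|S|).

Inductive reachable : {set {set 'I_m}} -> Prop :=
| reach0 : reachable K
| reachS B v : reachable B -> is_free B v -> B != [set v] -> reachable (next B v).

Definition admissible : Prop :=
  forall B, reachable B -> exists v, is_free B v.

Fixpoint retr_tail (B : {set {set 'I_m}})
    (s : seq ({set {set 'I_m}} * {set 'I_m} * {set 'I_m})) : Prop :=
  match s with
  | [::] => False
  | (B', E, v) :: s' =>
      B' = B /\ free_with B v E /\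
      match s' with
      | [::] => B = [set v] /\ E = v
      | _ => retr_tail (next B v) s'
      end
  end.
Definition retraction_seq s : Prop := retr_tail K s.
End Combinatorics.

Section Characteristic.
Local Open Scope ring_scope.
Variables (R : realFieldType) (n m : nat) (lam : 'I_m -> 'rV[int]_n).

Definition R_characteristic (K : {set {set 'I_m}}) : Prop :=
  forall S, S \in K -> forall c : 'I_m -> int,
    (forall i, i \notin S -> c i = 0) -> \sum_i c i *: lam i = 0 ->
    forall i, c i = 0.

Definition in_Rspan (S : {set 'I_m}) (x : 'rV[int]_n) : Prop :=
  exists c : 'I_m -> R, (forall i, i \notin S -> c i = 0) /\
    map_mx (fun z : int => z%:~R) x =
      \sum_i c i *: map_mx (fun z : int => z%:~R : R) (lam i).

Definition primitive k (w : 'rV[int]_k) : Prop :=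
  forall d : int, (forall j, (d %| w ord0 j)%Z) -> `|d|%N = 1%N.

(* gE_rel E v g : P realises rho_E : Z^n -> Z^n / (saturated span) = Z^(n-k),
   f enumerates the facets E /\ F_j through v, the rows of W are
   lambda_E(E /\ F_{f s}), and g = |det W|. *)
Definition gE_rel (E v : {set 'I_m}) (g : nat) : Prop :=
  exists (P : 'M[int]_(n, n - #|E|)) (f : 'I_(n - #|E|) -> 'I_m)
         (W : 'M[int]_(n - #|E|)),
    [/\ forall y : 'rV[int]_(n - #|E|), exists x : 'rV[int]_n, x *m P = y,
        forall x : 'rV[int]_n, x *m P = 0 <-> in_Rspan E x,
        injective f /\ (forall s, f s \in v :\: E) /\
          (forall i, i \in v :\: E -> exists s, f s = i),
        forall s, primitive (row s W) /\
          exists c : nat, (0 < c)%N /\ lam (f s) *m P = c%:Z *: row s W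
      & g = `|\det W|%N].

(* g_E(v), well defined (independent of choices); 0 if undefined *)
Definition gE (E v : {set 'I_m}) : nat :=
  epsilon (inhabits 0%N) (gE_rel E v).
End Characteristic.

(* Main.v *)
Require Import Defs.
From HB Require Import structures.
From mathcomp Require Import all_boot all_order all_algebra.
From mathcomp Require Import ring.
From Stdlib Require Import ClassicalEpsilon.

Module Helpers.
Set Implicit Arguments. Unset Strict Implicit. Unset Printing Implicit Defensive.
Import Order.TTheory GRing.Theory Num.Theory.
Local Open Scope ring_scope.

Lemma sum_reindex (n m : nat) (Rg : pzRingType) (V : lmodType Rg)
  (e : 'I_n -> 'I_m) (y : 'I_n -> Rg) (F : 'I_m -> V) :
  \sum_i (\sum_(k | e k == i) y k) *: F i = \sum_k y k *: F (e k).
Proof.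
under eq_bigr do rewrite scaler_suml.
rewrite (exchange_big_dep xpredT) //=.
apply: eq_bigr => k _; rewrite (big_pred1 (e k)) // => i /=; exact: eq_sym.
Qed.

Lemma sum_pick_inj (n m : nat) (Rg : nmodType) (e : 'I_n -> 'I_m) (y : 'I_n -> Rg) k :
  injective e -> \sum_(k' | e k' == e k) y k' = y k.
Proof. by move=> inj; rewrite (big_pred1 k) // => k'; rewrite /= inj_eq. Qed.

Section LinAlg.
Variables (n m : nat) (lam : 'I_m -> 'rV[int]_n).

Definition Zindep (e : 'I_n -> 'I_m) := forall c : 'I_m -> int,
  (forall i, (forall k, e k != i) -> c i = 0) -> \sum_i c i *: lam i = 0 -> forall i, c i = 0.

Definition Nmx (e : 'I_n -> 'I_m) : 'M[int]_n := \matrix_(k < n) lam (e k).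

Lemma detN_neq0 e : injective e -> Zindep e -> \det (Nmx e) != 0.
Proof.
move=> inj ind; apply/negP => /eqP d0.
pose NQ := map_mx (intr : int -> rat) (Nmx e).
have : \det NQ == 0 by rewrite det_map_mx d0 rmorph0.
case/det0P => y ny0 yN.
pose d : int := \prod_j denq (y 0 j).
pose z : 'rV[int]_n := \row_j (numq (y 0 j) * \prod_(k | k != j) denq (y 0 k)).
have zE : map_mx intr z = (d%:~R : rat) *: y.
  apply/rowP => j; rewrite !mxE rmorphM /= !rmorph_prod numqE [in RHS](bigD1 j) //=.
  ring.
have zN : z *m Nmx e = 0.
  apply/rowP => j; apply: (@intr_inj rat _ _).
  have := congr1 (fun M : 'M[rat]_(1,n) => M 0 j) (map_mxM (intr : int -> rat) z (Nmx e)).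
  by rewrite zE -scalemxAl yN scaler0 !mxE => ->.
have dn0 : d != 0 by apply/prodf_neq0 => j _; exact: denq_neq0.
have zn0 : z != 0.
  apply: contraNneq ny0 => z0.
  have : (d%:~R : rat) *: y == 0 by rewrite -zE z0 map_mx0.
  by rewrite scalemx_eq0 intr_eq0 (negbTE dn0).
pose c i := \sum_(k | e k == i) z 0 k.
have cz := ind c.
have h1 : forall i, (forall k, e k != i) -> c i = 0.
  by move=> i hi; rewrite /c big_pred0 // => k; exact/negbTE/hi.
have h2 : \sum_i c i *: lam i = 0.
  rewrite /c sum_reindex; transitivity (z *m Nmx e); last exact: zN.
  rewrite mulmx_sum_row; by apply: eq_bigr => k _; rewrite rowK.
have := cz h1 h2; move=> c0; apply/negP: zn0; apply/negPn/eqP/rowP => k.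
have := c0 (e k); rewrite /c sum_pick_inj // => ->; by rewrite mxE.
Qed.

Variable R : realFieldType.

Lemma span_all e : \det (Nmx e) != 0 -> forall x : 'rV[int]_n,
  exists y : 'I_n -> R, map_mx intr x = \sum_k y k *: map_mx intr (lam (e k)).
Proof.
move=> dn x; pose NR := map_mx (intr : int -> R) (Nmx e).
have u : NR \in unitmx by rewrite unitmxE unitfE det_map_mx intr_eq0.
exists (fun k => (map_mx intr x *m invmx NR) 0 k).
rewrite -{1}(mulmxKV u (map_mx intr x)) mulmx_sum_row.
by apply: eq_bigr => k _; rewrite -map_row rowK.
Qed.

End LinAlg.

Lemma prim_col n (h : (0 < n)%N) (Q : 'cV[int]_n) :
  exists (P : 'cV[int]_n) (c : int) (u : 'rV[int]_n), Q = c *: P /\ u *m P = 1%:M.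
Proof.
pose i0 : 'I_n := Ordinal h.
have [L uL [Rr uR [d _ EQ]]] := int_Smith_normal_form Q.
exists (col i0 L), (d`_0 * Rr 0 0), (row i0 (invmx L)); split.
  apply/matrixP => j a; rewrite (ord1 a) EQ !mxE big_ord1 !mxE (bigD1 i0) //= !mxE /=.
  rewrite big1 ?addr0; first by rewrite mulr1n; ring.
  move=> i /negbTE hi; rewrite !mxE.
  have -> : (val i == 0%N) = false by apply/negbTE; apply: contraFneq hi => hv; apply/eqP/val_inj.
  by rewrite mulr0n mulr0.
apply/matrixP => a b; rewrite (ord1 a) (ord1 b).
have := congr1 (fun M : 'M[int]_n => M i0 i0) (mulVmx uL).
by rewrite !mxE => <-; apply: eq_bigr => k _; rewrite !mxE.
Qed.

Section Wit.
Variables (R : realFieldType) (n m : nat) (lam : 'I_m -> 'rV[int]_n) (e : 'I_n -> 'I_m) (v : {set 'I_m}).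
Hypotheses (inj : injective e) (ein : forall k, e k \in v)
  (esurj : forall i, i \in v -> exists k, e k = i) (dN : \det (Nmx lam e) != 0).

Lemma in_Rspan_of (S : {set 'I_m}) x (y : 'I_n -> R) :
  map_mx intr x = \sum_k y k *: map_mx intr (lam (e k)) ->
  (forall k, e k \notin S -> y k = 0) -> in_Rspan R lam S x.
Proof.
move=> hx hy; exists (fun i => \sum_(k | e k == i) y k); split.
  move=> i hi; apply: big1 => k /eqP ek; apply: hy; by rewrite ek.
change (map_mx intr x = \sum_i (\sum_(k | e k == i) y k) *: map_mx intr (lam i)).
by rewrite sum_reindex.
Qed.

Definition ord0_elim T (s : 'I_0) : T. Proof. by case: s. Defined.

Lemma vert_wit : exists (P : 'M[int]_(n,0)) (f : 'I_0 -> 'I_m) (W : 'M[int]_0),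
  [/\ (forall y : 'rV[int]_0, exists x : 'rV[int]_n, x *m P = y),
      (forall x, x *m P = 0 <-> in_Rspan R lam v x),
      injective f /\ (forall s, f s \in v :\: v) /\ (forall i, i \in v :\: v -> exists s, f s = i),
      (forall s, primitive (row s W) /\ exists c : nat, (0 < c)%N /\ lam (f s) *m P = c%:Z *: row s W)
    & `|\det W|%N = `|\det W|%N].
Proof.
exists 0, (@ord0_elim _), 0; split => //.
- by move=> y; exists 0; rewrite [y]thinmx0 [LHS]thinmx0.
- move=> x; split=> [_|_]; last by rewrite mulmx0.
  have [y hy] := span_all R dN x.
  by apply: (in_Rspan_of hy) => k; rewrite ein.
- split; first by case.
  split; first by case.
  by move=> i; rewrite setDv inE.
- by case.
Qed.

Variables (E : {set 'I_m}) (r : 'I_n).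
Hypotheses (hE : forall k, k != r -> e k \in E) (hr : e r \notin E) (hEv : E \subset v).

Definition Mx (x : 'rV[int]_n) : 'M[int]_n := \matrix_(k < n) (if k == r then x else lam (e k)).
Definition Pc : 'cV[int]_n := \col_j cofactor (Mx 0) r j.

Lemma detMx x : \det (Mx x) = (x *m Pc) 0 0.
Proof.
rewrite (expand_det_row _ r) mxE; apply: eq_bigr => j _; rewrite !mxE eqxx; congr (_ * _).
rewrite /cofactor; congr (_ * \det _).
by apply/matrixP => a b; rewrite !mxE eq_sym (negbTE (neq_lift _ _)).
Qed.

Lemma Mx_er : Mx (lam (e r)) = Nmx lam e.
Proof. by apply/matrixP => a b; rewrite !mxE; case: eqP => // ->. Qed.

Lemma detMx_other k : k != r -> \det (Mx (lam (e k))) = 0.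
Proof.
move=> hk; rewrite (determinant_alternate hk) // => j.
by rewrite !mxE eqxx (negbTE hk).
Qed.

Lemma intr_xPc (x : 'rV[int]_n) (y : 'I_n -> R) :
  map_mx intr x = \sum_k y k *: map_mx intr (lam (e k)) ->
  ((x *m Pc) 0 0)%:~R = y r * (\det (Nmx lam e))%:~R.
Proof.
move=> hx.
have -> : ((x *m Pc) 0 0)%:~R = (map_mx intr x *m map_mx (intr : int -> R) Pc) 0 0.
  rewrite -(map_mxM (intr : int -> R)). by rewrite [RHS]mxE.
rewrite hx mulmx_suml summxE (bigD1 r) //= big1 ?addr0.
  by rewrite -scalemxAl mxE -map_mxM mxE -detMx Mx_er.
move=> k hk; by rewrite -scalemxAl mxE -map_mxM mxE -detMx detMx_other // mulr0.
Qed.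


Lemma edge_wit : exists (P : 'M[int]_(n,1)) (f : 'I_1 -> 'I_m) (W : 'M[int]_1),
  [/\ (forall y : 'rV[int]_1, exists x : 'rV[int]_n, x *m P = y),
      (forall x, x *m P = 0 <-> in_Rspan R lam E x),
      injective f /\ (forall s, f s \in v :\: E) /\ (forall i, i \in v :\: E -> exists s, f s = i),
      (forall s, primitive (row s W) /\ exists c : nat, (0 < c)%N /\ lam (f s) *m P = c%:Z *: row s W)
    & `|\det W|%N = `|\det W|%N].
Proof.
have n0 : (0 < n)%N by apply: leq_ltn_trans (ltn_ord r).
have [P [c [u [hc hu]]]] := prim_col n0 Pc.
have xc : forall x : 'rV[int]_n, (x *m Pc) 0 0 = c * (x *m P) 0 0.
  by move=> x; rewrite hc -scalemxAr mxE.
pose a := (lam (e r) *m P) 0 0.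
have dNa : \det (Nmx lam e) = c * a by rewrite -Mx_er detMx xc.
have ha : a != 0 by apply: contraNneq dN => a0; rewrite dNa a0 mulr0.
have hc0 : c != 0 by apply: contraNneq dN => c0; rewrite dNa c0 mul0r.
exists P, (fun _ => e r), (sgz a)%:M; split.
- move=> y; exists (y 0 0 *: u); rewrite -scalemxAl hu.
  by apply/matrixP => i j; rewrite (ord1 i) (ord1 j) !mxE eqxx mulr1n mulr1.
- move=> x.
  have e1 : x *m P = 0 <-> (x *m P) 0 0 = 0.
    split; first by move=> ->; rewrite mxE.
    by move=> h; apply/matrixP => i j; rewrite (ord1 i) (ord1 j) h mxE.
  have e2 : (x *m P) 0 0 = 0 <-> \det (Mx x) = 0.
    rewrite detMx xc; split; first by move=> ->; rewrite mulr0.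
    by move/eqP; rewrite mulf_eq0 (negbTE hc0) /= => /eqP.
  rewrite e1 e2; split.
  + move=> d0; have [y hy] := span_all R dN x.
    have := intr_xPc hy; rewrite -detMx d0 rmorph0 => /esym/eqP.
    rewrite mulf_eq0 intr_eq0 (negbTE dN) orbF => /eqP yr0.
    apply: (in_Rspan_of hy) => k hk.
    by have [->|/hE] := eqVneq k r => //; rewrite (negbTE hk).
  + case=> cR [hcR hx].
    change (map_mx intr x = \sum_i cR i *: map_mx intr (lam i)) in hx.
    have hx' : map_mx intr x = \sum_k cR (e k) *: map_mx intr (lam (e k)).
      transitivity (\sum_i (\sum_(k | e k == i) cR (e k)) *: map_mx (intr : int -> R) (lam i));
        last by rewrite sum_reindex.
      rewrite hx; apply: eq_bigr => i _; congr (_ *: _).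
      case: (boolP (i \in v)) => iv.
        by have [k <-] := esurj iv; rewrite sum_pick_inj.
      rewrite hcR; last by apply: contra iv; apply: (subsetP hEv).
      by rewrite big_pred0 // => k; apply/negbTE; apply: contraNneq iv => <-.
    have := intr_xPc hx'; rewrite (hcR _ hr) mul0r -detMx.
    by move/(@intr_inj R _ 0).
- split; first by move=> s1 s2 _; rewrite (ord1 s1) (ord1 s2).
  split; first by move=> s; rewrite inE hr ein.
  move=> i; rewrite inE => /andP [hiE iv]; have [k ek] := esurj iv.
  have [kr|/hE] := eqVneq k r; first by exists 0; rewrite -ek kr.
  by rewrite ek (negbTE hiE).
- move=> s; split.
    move=> d hd; have := hd 0; rewrite !mxE (ord1 s) eqxx mulr1n /dvdz.
    move=> hdv; have : (`|d| %| `|sgz a|)%N := hdv; have -> : `|sgz a|%N = 1%N by move: ha; case: (sgzP a).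
    by rewrite dvdn1 => /eqP.
  exists `|a|%N; split; first by rewrite absz_gt0.
  apply/matrixP => i j; rewrite (ord1 i) (ord1 j) (ord1 s) -/a !mxE eqxx mulr1n.
  by rewrite {1}(intEsg a) mulrC.
- by [].
Qed.

End Wit.

Section GE.
Variables (R : realFieldType) (n m : nat) (lam : 'I_m -> 'rV[int]_n) (K : {set {set 'I_m}}).
Hypothesis Rch : R_characteristic lam K.

Lemma enum_v (v : {set 'I_m}) : #|v| = n -> exists e : 'I_n -> 'I_m,
  [/\ injective e, (forall k, e k \in v) & (forall i, i \in v -> exists k, e k = i)].
Proof.
move=> hv; exists (fun k => enum_val (cast_ord (esym hv) k)); split.
- by move=> k1 k2 /enum_val_inj /cast_ord_inj.
- by move=> k; apply: enum_valP.
- move=> i iv; exists (cast_ord hv (enum_rank_in iv i)).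
  by rewrite cast_ordK enum_rankK_in.
Qed.

Lemma zindep_of v e : v \in K -> (forall k, e k \in v) -> Zindep lam e.
Proof.
move=> vK ein c hc hs; apply: (Rch vK _ hs) => i iv; apply: hc => k.
by apply: contraNneq iv => <-.
Qed.

Lemma rel_of (E v : {set 'I_m}) k (hk : k = (n - #|E|)%N) :
  (exists (P : 'M[int]_(n, k)) (f : 'I_k -> 'I_m) (W : 'M[int]_k),
  [/\ (forall y : 'rV[int]_k, exists x : 'rV[int]_n, x *m P = y),
      (forall x, x *m P = 0 <-> in_Rspan R lam E x),
      injective f /\ (forall s, f s \in v :\: E) /\ (forall i, i \in v :\: E -> exists s, f s = i),
      (forall s, primitive (row s W) /\ exists c : nat, (0 < c)%N /\ lam (f s) *m P = c%:Z *: row s W)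
    & `|\det W|%N = `|\det W|%N]) -> exists g, gE_rel R lam E v g.
Proof.
subst k; case=> P [f [W [h1 h2 h3 h4 _]]].
by exists `|\det W|%N, P, f, W.
Qed.

Lemma rel_uniq (E v : {set 'I_m}) g : gE_rel R lam E v g ->
  ((n - #|E|)%N = 0%N \/ (n - #|E|)%N = 1%N) -> g = 1%N.
Proof.
case=> P [f [W [_ _ _ hW ->]]].
move: (n - #|E|)%N P f W hW => k P f W hW [] hk; subst k.
  by rewrite det_mx00.
rewrite det_mx11; have [hp _] := hW 0.
apply: hp => j; rewrite (ord1 j) mxE; exact: dvdzz.
Qed.

Lemma gE_one (E v : {set 'I_m}) : (exists g, gE_rel R lam E v g) ->
  ((n - #|E|)%N = 0%N \/ (n - #|E|)%N = 1%N) -> gE R lam E v = 1%N.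
Proof.
move=> ex hk; apply: (rel_uniq _ hk); rewrite /gE.
exact: epsilon_spec.
Qed.

Lemma gE_vertex v : v \in K -> #|v| = n -> gE R lam v v = 1%N.
Proof.
move=> vK hv; have [e [inj ein esurj]] := enum_v hv.
have dN := detN_neq0 inj (zindep_of vK ein).
apply: gE_one; last by left; rewrite hv subnn.
apply: (@rel_of v v 0%N); first by rewrite hv subnn.
exact: (vert_wit R ein dN).
Qed.

Lemma gE_edge (E v : {set 'I_m}) : v \in K -> #|v| = n -> E \subset v -> (n - #|E|)%N = 1%N ->
  gE R lam E v = 1%N.
Proof.
move=> vK hv hEv hk; have [e [inj ein esurj]] := enum_v hv.
have dN := detN_neq0 inj (zindep_of vK ein).
apply: gE_one; last by right.
apply: (@rel_of E v 1%N); first by rewrite hk.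
have : #|v :\: E| == 1%N by rewrite cardsD (setIidPr hEv) hv hk.
case/cards1P => w hw.
have wv : w \in v :\: E by rewrite hw set11.
have [r er] := esurj w (subsetP (subsetDl v E) w wv).
have hr : e r \notin E by move: wv; rewrite inE er => /andP [].
have hE : forall k, k != r -> e k \in E.
  move=> k hkr; apply/negPn/negP => hkE.
  have : e k \in v :\: E by rewrite inE hkE ein.
  by rewrite hw inE -er => /eqP /inj /eqP; rewrite (negbTE hkr).
exact: (edge_wit R inj ein esurj dN hE hr hEv).
Qed.

End GE.

End Helpers.
Module Helpers2.
Set Implicit Arguments. Unset Strict Implicit. Unset Printing Implicit Defensive.

Section Comb.
Variables (n m : nat) (K : {set {set 'I_m}}).

Lemma free_uniq (B : {set {set 'I_m}}) (v E E' : {set 'I_m}) : free_with n K B v E -> free_with n K B v E' -> E = E'.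
Proof.
case/and5P => _ _ EB Ev /forall_inP hE; case/and5P => _ _ E'B E'v /forall_inP hE'.
apply/eqP; rewrite eqEsubset; apply/andP; split.
  exact: (implyP (hE E' E'B)).
exact: (implyP (hE' E EB)).
Qed.

Lemma Eof_spec (B : {set {set 'I_m}}) (v : {set 'I_m}) : is_free n K B v -> free_with n K B v (Eof n K B v).
Proof.
rewrite /Eof; case: pickP => [E //|h]; case/existsP => E hE.
by rewrite h in hE.
Qed.

Definition verts (B : {set {set 'I_m}}) := [set w in B | isvert n K w].

Lemma vert_sub (w v : {set 'I_m}) : isvert n K w -> isvert n K v -> w \subset v -> w = v.
Proof.
case/andP => _ /eqP hw; case/andP => _ /eqP hv hs.
by apply/eqP; rewrite eqEcard hs hw hv leqnn.
Qed.

Lemma verts_next (B : {set {set 'I_m}}) (v : {set 'I_m}) : isvert n K v -> verts (Defs.next B v) = verts B :\: [set v].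
Proof.
move=> iv; apply/setP => w; rewrite !inE.
case: (boolP (isvert n K w)) => iw; last by rewrite !andbF.
rewrite !andbT; case: (boolP (w \subset v)) => hs /=.
  by rewrite andbF (vert_sub iw iv hs) eqxx.
have [ew|_] := eqVneq w v; first by rewrite ew subxx in hs.
by rewrite andbT.
Qed.

Lemma build (P : {set {set 'I_m}} -> {set 'I_m} -> {set 'I_m} -> Prop) :
  (forall B, reachable n K B -> exists v, is_free n K B v /\ P B (Eof n K B v) v) ->
  forall N (B : {set {set 'I_m}}), #|B| <= N -> reachable n K B ->
  exists s, [/\ retr_tail n K B s, size s = #|verts B|
             & forall B' E v, (B', E, v) \in s -> P B' E v].
Proof.
move=> hyp; elim => [|N IH] B hB rB.
  have [v [fv _]] := hyp B rB; case/existsP: fv => E /and5P [_ vB _ _ _].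
  by move: hB; rewrite leqn0 => /eqP /cards0_eq B0; rewrite B0 inE in vB.
have [v [fv Pv]] := hyp B rB.
have hE := Eof_spec fv; set E := Eof n K B v in Pv hE.
have /and5P [iv vB EB Ev _] := hE.
have [Bv|Bnv] := eqVneq B [set v].
  exists [:: (B, E, v)]; split.
  - split => //; split => //; split => //.
    by move: EB; rewrite Bv => /set1P.
  - rewrite Bv /=; suff -> : verts [set v] = [set v] by rewrite cards1.
    apply/setP => w; rewrite !inE; case: eqP => // ->; by rewrite iv.
  - by move=> B' E' v'; rewrite mem_seq1 => /eqP [-> -> ->].
have rB' := reachS rB fv Bnv.
have hlt : #|Defs.next B v| < #|B|.
  apply: proper_card; apply/properP; split.
    by apply/subsetP => S; rewrite inE => /andP [].
  by exists v => //; rewrite inE subxx andbF.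
have [s' [hs' sz' Ps']] := IH (Defs.next B v) (leq_trans hlt hB : _ <= _)%N rB'.
exists ((B, E, v) :: s'); split.
- case: s' hs' {sz' Ps'} => [//|t s''] hs'.
  by split => //; split.
- by rewrite /= sz' verts_next // (cardsD1 v (verts B)) inE vB iv.
- move=> B' E' v'; rewrite in_cons => /orP [/eqP [-> -> ->] //|]; exact: Ps'.
Qed.

End Comb.

End Helpers2.
Import Helpers Helpers2.

Theorem mainTheorem7 (R : realFieldType) (n m : nat)
    (A : 'M[R]_(m, n)) (b : 'cV[R]_m)
    (K : {set {set 'I_m}}) (lam : 'I_m -> 'rV[int]_n) :
  simple_polytope A b ->
  (forall S : {set 'I_m}, S \in K <-> meets A b S) ->
  R_characteristic lam K ->
  admissible n K ->
  (forall B, reachable n K B -> (1 < dimB n B)%N ->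
     \big[gcdn/0%N]_(v in B | is_free n K B v) gE R lam (Eof n K B v) v = 1%N) ->
  forall p : nat, prime p ->
    exists s : seq ({set {set 'I_m}} * {set 'I_m} * {set 'I_m}),
      [/\ retraction_seq n K s,
          size s = nverts n K
        & forall B E v, (B, E, v) \in s -> coprime p (gE R lam E v)].
Proof.
move=> _ _ Rch adm hgcd p pp.
have hyp : forall B, reachable n K B ->
    exists v, is_free n K B v /\ coprime p (gE R lam (Eof n K B v) v).
  move=> B rB; case: (ltnP 1 (dimB n B)) => hd.
    have g1 := hgcd B rB hd.
    case: (pickP (fun v => [&& v \in B, is_free n K B v &
                 coprime p (gE R lam (Eof n K B v) v)])) => [v /and3P [_ fv cp] | none].
      by exists v.
    exfalso.
    have : (p %| \big[gcdn/0%N]_(v in B | is_free n K B v) gE R lam (Eof n K B v) v)%N.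
      apply: (big_ind (fun x => p %| x)%N) => //.
        by move=> x y hx hy; rewrite dvdn_gcd hx hy.
      move=> v /andP [vB fv]; have := none v; rewrite vB fv /= prime_coprime //.
      by move/negbFE.
    by rewrite g1 dvdn1 => /eqP p1; rewrite p1 in pp.
  have [v fv] := adm B rB; exists v; split => //.
  have hE := Eof_spec fv; set E := Eof n K B v in hE *.
  case/and5P: hE => iv vB EB Ev _; case/andP: iv => vK /eqP hv.
  have hle : (n - #|E| <= 1)%N.
    apply: leq_trans hd; rewrite /dimB; exact: (@leq_bigmax_cond _ (fun S => S \in B) (fun S : {set 'I_m} => (n - #|S|)%N) E EB).
  have hEn : (#|E| <= n)%N by rewrite -hv subset_leq_card.
  case hk : (n - #|E|)%N hle => [|[|k]] // _.
    have Ee : E = v.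
      apply/eqP; rewrite eqEcard Ev hv.
      by move/eqP: hk; rewrite subn_eq0.
    by rewrite Ee (gE_vertex R Rch vK hv) coprimen1.
  by rewrite (gE_edge R Rch vK hv Ev hk) coprimen1.
have [s [hs sz Ps]] := @build n m K (fun _ E v => coprime p (gE R lam E v)) hyp #|K| K (leqnn _) (reach0 n K).
exists s; split => //.
rewrite sz /nverts /verts; apply: eq_card => w.
by rewrite !inE /isvert andbA andbb.
Qed.
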